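(* Let $(F_n)$ be the Fibonacci numbers ($F_0=0$, $F_1=1$, $F_{n+2}=F_{n+1}+F_n$), $(E_n)$ the sequence with $E_0=0$, $E_1=E_2=1$, $E_{n+3}=E_n+E_{n+2}$, and $(D_n)$ the sequence with $D_0=1$, $D_1=D_2=0$, $D_{n+3}=D_n+D_{n+1}$. Then $$D_n<E_{n-1}\ \text{ for all integers } n\ge 4,\qquad E_n<F_{n-1}\ \text{ for all integers } n\ge 6.$$ *)

(* Defs.v *)
From Stdlib Require Import Arith Lia List.
Import ListNotations.

Fixpoint F (n : nat) : nat :=
  match n with
  | 0 => 0
  | 1 => 1
  | S ((S m) as p) => F p + F m
  end.

Fixpoint E (n : nat) : nat :=
  match n with
  | 0 => 0
  | 1 => 1
  | 2 => 1
  | S ((S ((S m) as q)) as p) => E m + E p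
  end.

Fixpoint D (n : nat) : nat :=
  match n with
  | 0 => 1
  | 1 => 0
  | 2 => 0
  | S ((S ((S m) as q)) as p) => D m + D q
  end.
Example F_test : List.map F (List.seq 0 8) = 0::1::1::2::3::5::8::13::nil. Proof. reflexivity. Qed.
Example E_test : List.map E (List.seq 0 8) = 0::1::1::1::2::3::4::6::nil. Proof. reflexivity. Qed.
Example D_test : List.map D (List.seq 0 8) = 1::0::0::1::0::1::1::1::nil. Proof. reflexivity. Qed.

(* Main.v *)
Require Import Defs.
From Stdlib Require Import Arith Lia.

Lemma E_mono : forall n, E n <= E (S n).
Proof.
  intros [|[|[|n]]]; simpl; try lia.
Qed.

Lemma F_mono : forall n, F n <= F (S n).
Proof.
  intros [|n]; simpl; try lia.
Qed.

Lemma Drec : forall m, D (S (S (S m))) = D m + D (S m).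
Proof. reflexivity. Qed.
Lemma Erec : forall m, E (S (S (S m))) = E m + E (S (S m)).
Proof. reflexivity. Qed.
Lemma Frec : forall m, F (S (S m)) = F (S m) + F m.
Proof. reflexivity. Qed.

Lemma part1 : forall k, D (k+4) < E (k+3) /\ D (k+5) < E (k+4) /\ D (k+6) < E (k+5).
Proof.
  induction k as [|k [H1 [H2 H3]]].
  - simpl. repeat split; lia.
  - pose proof (Drec (k+4)) as R1. pose proof (Erec (k+3)) as R2.
    pose proof (E_mono (k+4)) as M.
    replace (S (S (S (k+4)))) with (S k + 6) in R1 by lia.
    replace (S (k+4)) with (k+5) in R1, M by lia.
    replace (S (S (S (k+3)))) with (S k + 5) in R2 by lia.
    replace (S (S (k+3))) with (k+5) in R2 by lia.
    replace (S k + 4) with (k+5) by lia.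
    replace (S k + 3) with (k+4) by lia.
    replace (S k + 5) with (k+6) in * by lia.
    repeat split; lia.
Qed.

Lemma part2 : forall k, E (k+6) < F (k+5) /\ E (k+7) < F (k+6) /\ E (k+8) < F (k+7).
Proof.
  induction k as [|k [H1 [H2 H3]]].
  - simpl. repeat split; lia.
  - pose proof (Erec (k+6)) as R1. pose proof (Frec (k+6)) as R2.
    pose proof (F_mono (k+5)) as M.
    replace (S (S (S (k+6)))) with (S k + 8) in R1 by lia.
    replace (S (S (k+6))) with (k+8) in R1, R2 by lia.
    replace (S (k+6)) with (k+7) in R2 by lia.
    replace (S (k+5)) with (k+6) in M by lia.
    replace (S k + 6) with (k+7) by lia.
    replace (S k + 5) with (k+6) by lia.
    replace (S k + 7) with (k+8) in * by lia.
    repeat split; lia.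
Qed.

Theorem theorem12 :
  (forall n : nat, 4 <= n -> D n < E (n - 1)) /\
  (forall n : nat, 6 <= n -> E n < F (n - 1)).
Proof.
  split; intros n Hn.
  - destruct (part1 (n-4)) as [H _].
    replace (n-4+4) with n in H by lia. replace (n-4+3) with (n-1) in H by lia. exact H.
  - destruct (part2 (n-6)) as [H _].
    replace (n-6+6) with n in H by lia. replace (n-6+5) with (n-1) in H by lia. exact H.
Qed.
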